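(* Let $r\ge 2$ and $m$ be integers with $0\le 2m\le r$, $n=2r-4m$, and let $f:S^2(S^r(\mathbb{C}^2))\to S^{n}(\mathbb{C}^2)$ be an $\mathfrak{sl}_2(\mathbb{C})$-equivariant linear map, written $f=\sum_{k=0}^n q_k w_k$. Let $k,i$ be integers with $0\le k\le r-2m$ and $0\le i\le r$, and let $j=2m+k-i$. Then $$q_k(x_ix_j)=q_{n-k}(x_{r-i}x_{r-j}),$$ with the convention $x_l=0$ for $l\notin[0,r]$.
   Context: $\mathfrak{sl}_2(\mathbb{C})$ has basis $X=\begin{pmatrix}0&1\\0&0\end{pmatrix}$, $H=\begin{pmatrix}1&0\\0&-1\end{pmatrix}$, $Y=\begin{pmatrix}0&0\\1&0\end{pmatrix}$, acting on the irreducible modules $S^d(\mathbb{C}^2)$. Let $x_0\in S^r(\mathbb{C}^2)$ be a highest weight vector and $x_i=Y^ix_0/i!$ ($0\le i\le r$), so $Yx_i=(i+1)x_{i+1}$, $Xx_i=(r-i+1)x_{i-1}$, $Hx_i=(r-2i)x_i$. Let $w_0\in S^n(\mathbb{C}^2)$ be a highest weight vector and $w_k=Y^kw_0/k!$ ($0\le k\le n$). Writing $f=\sum_{k=0}^n q_kw_k$ means $f(u)=\sum_k q_k(u)w_k$ for linear forms $q_k$ on $S^2(S^r(\mathbb{C}^2))$; $q_k(x_ix_j)$ is the value on the product $x_ix_j$. *)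

(* Defs.v *)
(* The base field C is modelled as R[i] (complex numbers over a
   real-closed field); with R : realType (Dedekind-complete ordered field = the
   reals), R[i] is the field of complex numbers. *)
From mathcomp Require Import all_boot all_order all_algebra.
From mathcomp Require Import reals complex.
Import GRing.Theory Num.Theory.
Local Open Scope ring_scope.

Notation CC R := (complex R).

(* A linear map f : S^2(S^r C^2) -> S^n C^2, f = sum_k q_k w_k, is given by the
   numbers  q k i j = q_k(x_i x_j)  for 0 <= k <= n, 0 <= i,j <= r
   (the products x_i x_j, i <= j, form a basis of S^2(S^r C^2)).
   Values of q outside these ranges are irrelevant: [qx] masks them to 0,
   which implements the convention x_l = 0 for l outside [0,r] (and w_k = 0
   for k outside [0,n]). *)
Definition qx {R : realType} (r n : nat) (q : nat -> nat -> nat -> CC R)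
    (k i j : nat) : CC R :=
  if [&& (k <= n)%N, (i <= r)%N & (j <= r)%N] then q k i j else 0.

Definition qz {R : realType} (r n : nat) (q : nat -> nat -> nat -> CC R)
    (k : nat) (i j : int) : CC R :=
  match i, j with
  | Posz i', Posz j' => qx r n q k i' j'
  | _, _ => 0
  end.

(* q is a well-defined family of linear forms on S^2(S^r): x_i x_j = x_j x_i *)
Definition sym_forms {R : realType} (r n : nat) (q : nat -> nat -> nat -> CC R) :=
  forall k i j, (k <= n)%N -> (i <= r)%N -> (j <= r)%N -> q k i j = q k j i.

(* Action of sl_2 on S^d(C^2) in the basis w_0..w_d, on coordinate vectors v
   (v k = coefficient of w_k):  Y w_k = (k+1) w_{k+1},  X w_k = (d-k+1) w_{k-1},
   H w_k = (d-2k) w_k. *)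
Definition actY {R : realType} (d : nat) (v : nat -> CC R) (k : nat) : CC R :=
  if k is k'.+1 then k%:R * v k' else 0.
Definition actX {R : realType} (d : nat) (v : nat -> CC R) (k : nat) : CC R :=
  (d - k)%:R * v k.+1.
Definition actH {R : realType} (d : nat) (v : nat -> CC R) (k : nat) : CC R :=
  (d%:R - (2 * k)%:R) * v k.

(* k-th coordinate of f(A . (x_i x_j)) for A = Y, X, H, where the action on
   S^2(S^r) is A(x_i x_j) = (A x_i) x_j + x_i (A x_j) and
   Y x_i = (i+1) x_{i+1}, X x_i = (r-i+1) x_{i-1}, H x_i = (r-2i) x_i. *)
Definition fY {R : realType} (r n : nat) q (i j k : nat) : CC R :=
  i.+1%:R * qx r n q k i.+1 j + j.+1%:R * qx r n q k i j.+1.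
Definition fX {R : realType} (r n : nat) q (i j k : nat) : CC R :=
  (if i is i'.+1 then (r - i')%:R * qx r n q k i' j else 0) +
  (if j is j'.+1 then (r - j')%:R * qx r n q k i j' else 0).
Definition fH {R : realType} (r n : nat) q (i j k : nat) : CC R :=
  ((r%:R - (2 * i)%:R) + (r%:R - (2 * j)%:R)) * qx r n q k i j.

(* f is sl_2-equivariant: f(A u) = A f(u) for A in {X, H, Y} (a basis of sl_2)
   and u ranging over the basis x_i x_j of S^2(S^r C^2). *)
Definition sl2_equivariant {R : realType} (r n : nat) (q : nat -> nat -> nat -> CC R) :=
  forall i j k, (i <= r)%N -> (j <= r)%N -> (k <= n)%N ->
    [/\ fY r n q i j k = actY n (fun l => qx r n q l i j) k,
        fX r n q i j k = actX n (fun l => qx r n q l i j) k &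
        fH r n q i j k = actH n (fun l => qx r n q l i j) k].

(* Main.v *)
Require Import Defs.
From mathcomp Require Import all_boot all_order all_algebra.
From mathcomp Require Import reals complex.
From mathcomp Require Import zify.
Import GRing.Theory Num.Theory.
Local Open Scope ring_scope.

Lemma qx_out (R : realType) r n (q : nat -> nat -> nat -> CC R) k i j :
  ~~ [&& (k <= n)%N, (i <= r)%N & (j <= r)%N] -> qx r n q k i j = 0.
Proof. by rewrite /qx => /negbTE ->. Qed.

Lemma step (R : realType) r n (q : nat -> nat -> nat -> CC R) k :
  sl2_equivariant r n q -> (0 < k)%N -> (k <= n)%N ->
  (forall i j, (i <= r)%N -> (j <= r)%N ->
     qx r n q k i j = qx r n q (n - k)%N (r - i)%N (r - j)%N) ->
  forall i j, (i <= r)%N -> (j <= r)%N ->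
     qx r n q k.-1 i j = qx r n q (n - k.-1)%N (r - i)%N (r - j)%N.
Proof.
move=> E k0 kn IH i j hi hj.
have [Y _ _] := E i j k hi hj kn.
have [_ X _] := E (r - i)%N (r - j)%N (n - k)%N (leq_subr _ _) (leq_subr _ _) (leq_subr _ _).
rewrite /fY /actY in Y; rewrite /fX /actX in X.
have T1 : i.+1%:R * qx r n q k i.+1 j =
  (if (r - i)%N is i'.+1 then (r - i')%N%:R * qx r n q (n - k)%N i' (r - j)%N else 0).
  case: (ltnP i r) => hir.
    have -> : (r - i = (r - i.+1).+1)%N by lia.
    rewrite IH // ; have -> : (r - (r - i.+1) = i.+1)%N by lia. by [].
  have -> : (r - i = 0)%N by lia.
  rewrite qx_out ?mulr0 //; apply/negP => /and3P [_ h _]; lia.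
have T2 : j.+1%:R * qx r n q k i j.+1 =
  (if (r - j)%N is j'.+1 then (r - j')%N%:R * qx r n q (n - k)%N (r - i)%N j' else 0).
  case: (ltnP j r) => hjr.
    have -> : (r - j = (r - j.+1).+1)%N by lia.
    rewrite IH // ; have -> : (r - (r - j.+1) = j.+1)%N by lia. by [].
  have -> : (r - j = 0)%N by lia.
  rewrite qx_out ?mulr0 //; apply/negP => /and3P [_ _ h]; lia.
rewrite T1 T2 X in Y.
case: k k0 kn IH Y {T1 T2 X} => // k' _ kn IH Y.
have e1 : (n - (n - k'.+1) = k'.+1)%N by lia.
have e2 : ((n - k'.+1).+1 = n - k')%N by lia.
rewrite e1 e2 in Y.
apply: (mulfI (x := k'.+1%:R)); first by rewrite pnatr_eq0.
by rewrite -Y.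
Qed.

Lemma middle (R : realType) r n (q : nat -> nat -> nat -> CC R) h :
  n = (2 * h)%N -> sym_forms r n q -> sl2_equivariant r n q ->
  forall i j, (i <= r)%N -> (j <= r)%N ->
     qx r n q h i j = qx r n q (n - h)%N (r - i)%N (r - j)%N.
Proof.
move=> En S E i j hi hj.
have -> : (n - h = h)%N by lia.
have hn : (h <= n)%N by lia.
have z : forall a b, (a <= r)%N -> (b <= r)%N -> (a + b != r)%N -> qx r n q h a b = 0.
  move=> a b ha hb hab.
  have [_ _ H] := E a b h ha hb hn.
  rewrite /fH /actH in H.
  have e : n%:R - (2 * h)%:R = 0 :> CC R by rewrite En subrr.
  rewrite e mul0r in H.
  move/eqP: H; rewrite mulf_eq0 => /orP [|/eqP //].
  rewrite addrACA -opprD -!natrD subr_eq0 eqr_nat => /eqP; lia.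
case: (eqVneq (i + j)%N r) => hij.
  have -> : (r - i = j)%N by lia.
  have -> : (r - j = i)%N by lia.
  by rewrite /qx hn hi hj /= S.
rewrite z ?leq_subr // z //; apply/eqP; lia.
Qed.

Theorem mainTheorem4 (R : realType) (r m n : nat) (q : nat -> nat -> nat -> CC R) :
  (2 <= r)%N -> (2 * m <= r)%N -> n = (2 * r - 4 * m)%N ->
  sym_forms r n q -> sl2_equivariant r n q ->
  forall k i : nat, (k <= r - 2 * m)%N -> (i <= r)%N ->
  let j : int := (2 * m + k)%:Z - i%:Z in
  qz r n q k i j = qz r n q (n - k) (r%:Z - i%:Z) (r%:Z - j).
Proof.
move=> r2 mr En S E k i hk hi j.
set h := (r - 2 * m)%N.
have Enh : n = (2 * h)%N by rewrite /h; lia.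
have key : forall t, (t <= h)%N -> forall a b, (a <= r)%N -> (b <= r)%N ->
    qx r n q (h - t)%N a b = qx r n q (n - (h - t))%N (r - a)%N (r - b)%N.
  elim=> [|t IHt] ht a b ha hb.
    rewrite subn0; exact: middle Enh S E a b ha hb.
  have -> : (h - t.+1 = (h - t).-1)%N by lia.
  apply: step => //; first lia.
  - lia.
  - apply: IHt; lia.
have K : forall a b, (a <= r)%N -> (b <= r)%N ->
    qx r n q k a b = qx r n q (n - k)%N (r - a)%N (r - b)%N.
  move=> a b ha hb; have -> : k = (h - (h - k))%N by lia.
  apply: key => //; lia.
have -> : r%:Z - i%:Z = Posz (r - i)%N by rewrite subzn.
rewrite /j.
case: (leqP i (2 * m + k)) => hik.
  have -> : (2 * m + k)%:Z - i%:Z = Posz (2 * m + k - i)%N by rewrite subzn.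
  case: (leqP (2 * m + k - i)%N r) => hjr.
    have -> : r%:Z - Posz (2 * m + k - i)%N = Posz (r - (2 * m + k - i))%N by rewrite subzn.
    by rewrite /= K.
  have -> : r%:Z - Posz (2 * m + k - i)%N = - Posz (2 * m + k - i - r)%N.
    by rewrite subzn ?opprB //; lia.
  rewrite /= qx_out; last by apply/negP => /and3P [_ _ h']; lia.
  case E1 : (- Posz (2 * m + k - i - r)%N) => [x|x] //.
  exfalso; have : (- Posz (2 * m + k - i - r)%N < 0) by rewrite oppr_lt0 ltz_nat; lia.
  by rewrite E1.
have -> : (2 * m + k)%:Z - i%:Z = - Posz (i - (2 * m + k))%N.
  by rewrite -opprB subzn // ltnW.
have -> : r%:Z - - Posz (i - (2 * m + k))%N = Posz (r + (i - (2 * m + k)))%N.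
  by rewrite opprK.
rewrite /= qx_out; last by apply/negP => /and3P [_ _ h']; lia.
case E1 : (- Posz (i - (2 * m + k))%N) => [x|x] //.
exfalso; have : (- Posz (i - (2 * m + k))%N < 0) by rewrite oppr_lt0 ltz_nat; lia.
by rewrite E1.
Qed.
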